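(* Let $\mathbf A$ be a pseudo-Kleene lattice. Then $\mathbf A$ satisfies (SP1) if and only if $\mathbf A$ contains no subalgebra isomorphic to $\mathbf B_6$ and no subalgebra isomorphic to $\mathbf B_8$.
   Context: A pseudo-Kleene lattice is an algebra $(A,\land,\lor,{}',0,1)$ that is a bounded lattice with an antitone involution ${}'$ ($x\leq y\Rightarrow y'\leq x'$, $x''=x$) satisfying $x\land x'\leq y\lor y'$; subalgebras are with respect to $\land,\lor,{}',0,1$. (SP1) is the condition: for all $x,y$, if $x\leq y$ and $x'\land y=(x\land x')\lor(y\land y')$, then $y\land(x\lor x')=x\lor(y\land y')$. $\mathbf B_6$ is the pseudo-Kleene lattice (ortholattice) with elements $0,x,y,y',x',1$, covers $0\prec x\prec y\prec 1$, $0\prec y'\prec x'\prec 1$, involution $u\leftrightarrow u'$, $0\leftrightarrow 1$. $\mathbf B_8$ is the pseudo-Kleene lattice with elements $0,z',x,y,y',x',z,1$, covers $0\prec z'$, $z'\prec x\prec y\prec z$, $z'\prec y'\prec x'\prec z$, $z\prec 1$, involution $u\leftrightarrow u'$, $0\leftrightarrow 1$. *)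

(* Defs.v *)
From mathcomp Require Import all_boot all_order.
Set Implicit Arguments. Unset Strict Implicit. Unset Printing Implicit Defensive.
Import Order.TTheory.
Local Open Scope order_scope.

Section PK.
Context {disp : Order.disp_t} {T : tbLatticeType disp}.

Definition pseudo_kleene (c : T -> T) : Prop :=
  [/\ (forall x y : T, x <= y -> c y <= c x),
      (forall x : T, c (c x) = x) &
      (forall x y : T, x `&` c x <= y `|` c y)].

Definition SP1 (c : T -> T) : Prop :=
  forall x y : T, x <= y ->
    c x `&` y = (x `&` c x) `|` (y `&` c y) ->
    y `&` (x `|` c x) = x `|` (y `&` c y).

(* f : S -> T is an embedding of the algebra (S, m, j, i, o, t) into
   (T, meet, join, c, \bot, \top); its image is a subalgebra isomorphic to S. *)
Definition embedding (S : Type) (m j : S -> S -> S) (i : S -> S) (o t : S)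
  (c : T -> T) (f : S -> T) : Prop :=
  [/\ injective f,
      (forall a b, f (m a b) = f a `&` f b),
      (forall a b, f (j a b) = f a `|` f b),
      (forall a, f (i a) = c (f a)) &
      (f o = \bot /\ f t = \top)].
End PK.

(* ---- B6 : 0 < x < y < 1,  0 < y' < x' < 1 ---- *)
Inductive B6 := b6_0 | b6_x | b6_y | b6_y' | b6_x' | b6_1.

Definition B6_le (a b : B6) : bool :=
  match a, b with
  | b6_0, _ => true
  | _, b6_1 => true
  | b6_x, (b6_x | b6_y) => true
  | b6_y, b6_y => true
  | b6_y', (b6_y' | b6_x') => true
  | b6_x', b6_x' => true
  | _, _ => false
  end.
Definition B6_meet (a b : B6) : B6 :=
  if B6_le a b then a else if B6_le b a then b else b6_0.
Definition B6_join (a b : B6) : B6 :=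
  if B6_le a b then b else if B6_le b a then a else b6_1.
Definition B6_inv (a : B6) : B6 :=
  match a with
  | b6_0 => b6_1 | b6_1 => b6_0
  | b6_x => b6_x' | b6_x' => b6_x
  | b6_y => b6_y' | b6_y' => b6_y
  end.

(* ---- B8 : 0 < z' < x < y < z < 1,  z' < y' < x' < z ---- *)
Inductive B8 := b8_0 | b8_z' | b8_x | b8_y | b8_y' | b8_x' | b8_z | b8_1.

Definition B8_le (a b : B8) : bool :=
  match a, b with
  | b8_0, _ => true
  | _, b8_1 => true
  | b8_z', (b8_z' | b8_x | b8_y | b8_y' | b8_x' | b8_z) => true
  | b8_x, (b8_x | b8_y | b8_z) => true
  | b8_y, (b8_y | b8_z) => true
  | b8_y', (b8_y' | b8_x' | b8_z) => true
  | b8_x', (b8_x' | b8_z) => true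
  | b8_z, b8_z => true
  | _, _ => false
  end.
Definition B8_meet (a b : B8) : B8 :=
  if B8_le a b then a else if B8_le b a then b else b8_z'.
Definition B8_join (a b : B8) : B8 :=
  if B8_le a b then b else if B8_le b a then a else b8_z.
Definition B8_inv (a : B8) : B8 :=
  match a with
  | b8_0 => b8_1 | b8_1 => b8_0
  | b8_z' => b8_z | b8_z => b8_z'
  | b8_x => b8_x' | b8_x' => b8_x
  | b8_y => b8_y' | b8_y' => b8_y
  end.

Definition has_sub_B6 {disp} {T : tbLatticeType disp} (c : T -> T) : Prop :=
  exists f : B6 -> T, embedding B6_meet B6_join B6_inv b6_0 b6_1 c f.
Definition has_sub_B8 {disp} {T : tbLatticeType disp} (c : T -> T) : Prop :=
  exists f : B8 -> T, embedding B8_meet B8_join B8_inv b8_0 b8_1 c f.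

(* Main.v *)
Require Import Defs.
From mathcomp Require Import all_boot all_order.
Set Implicit Arguments. Unset Strict Implicit. Unset Printing Implicit Defensive.
Import Order.TTheory.

Section Core.
Local Open Scope order_scope.
Context {disp : Order.disp_t} {T : tbLatticeType disp} (c : T -> T).
Hypothesis hpk : pseudo_kleene c.

Lemma c_anti x y : x <= y -> c y <= c x.
Proof. by case: hpk => H _ _; apply: H. Qed.
Lemma cc x : c (c x) = x.
Proof. by case: hpk => _ H _; apply: H. Qed.
Lemma c_le x y : c x <= y -> c y <= x.
Proof. by move=> /c_anti; rewrite cc. Qed.
Lemma c_ge x y : x <= c y -> y <= c x.
Proof. by move=> /c_anti; rewrite cc. Qed.
Lemma kleene x y : x `&` c x <= y `|` c y.
Proof. by case: hpk => _ _ H; apply: H. Qed.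
Lemma cJ x y : c (x `|` y) = c x `&` c y.
Proof.
apply: le_anti; rewrite lexI !c_anti ?leUl ?leUr //=.
apply: c_ge; rewrite leUx; apply/andP; split; apply: c_ge; [exact: leIl|exact: leIr].
Qed.
Lemma cM x y : c (x `&` y) = c x `|` c y.
Proof. by rewrite -[RHS]cc cJ !cc. Qed.
Lemma c0 : c \bot = \top.
Proof. by apply: le_anti; rewrite lex1 /=; apply: c_ge; rewrite le0x. Qed.
Lemma c1 : c \top = \bot.
Proof. by rewrite -c0 cc. Qed.

Variables (a b m : T).
Hypotheses (hab : a <= b) (hma : m <= a)
  (m1 : a `&` c a = m) (m2 : a `&` c b = m) (m3 : b `&` c a = m) (m4 : b `&` c b = m)
  (nab : a <> b).

Lemma joins : [/\ a `|` c a = c m, a `|` c b = c m, b `|` c a = c m & b `|` c b = c m].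
Proof.
split; rewrite -[LHS]cc cJ cc meetC.
- by rewrite m1.
- by rewrite m3.
- by rewrite m2.
- by rewrite m4.
Qed.

Lemma hmcb : m <= c b. Proof. by rewrite -m4 leIr. Qed.
Lemma hbm : b <= c m. Proof. by apply: c_ge; exact: hmcb. Qed.
Lemma hcbca : c b <= c a. Proof. exact: c_anti. Qed.
Lemma hcam : c a <= c m. Proof. exact: c_anti. Qed.
Lemma hmb : m <= b. Proof. exact: le_trans hma hab. Qed.
Lemma hmcm : m <= c m. Proof. exact: le_trans hmb hbm. Qed.
Lemma hacm : a <= c m. Proof. exact: le_trans hab hbm. Qed.
Lemma hmca : m <= c a. Proof. exact: le_trans hmcb hcbca. Qed.
Lemma hcbcm : c b <= c m. Proof. exact: le_trans hcbca hcam. Qed.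

Lemma n8 : a <> m.
Proof.
move=> E; apply: nab; have : b <= c a by apply: c_ge; rewrite E hmcb.
by move/meet_l; rewrite m3 => <-.
Qed.
Lemma n9 : b <> m.
Proof. by move=> E; apply: nab; apply: le_anti; rewrite hab E hma. Qed.
Lemma n10 : c b <> m.
Proof.
move=> E; apply: nab; have Hb : b = c m by rewrite -E cc.
have : c a <= b by rewrite Hb hcam.
move/meet_r; rewrite m3 => E2.
by rewrite -(cc a) -(cc b) -E2 E.
Qed.
Lemma n11 : c a <> m.
Proof.
move=> E; apply: nab; have Ha : a = c m by rewrite -E cc.
by apply: le_anti; rewrite hab Ha hbm.
Qed.
Lemma n12 : m <> c m.
Proof. by move=> E; apply: nab; apply: le_anti; rewrite hab (le_trans hbm) // -E. Qed.
Lemma n14 : a <> c b.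
Proof. by move=> E; apply: n8; rewrite -m2 -E meetxx. Qed.
Lemma n15 : a <> c a.
Proof. by move=> E; apply: n8; rewrite -m1 -E meetxx. Qed.
Lemma n16 : b <> c b.
Proof. by move=> E; apply: n9; rewrite -m4 -E meetxx. Qed.

Section B8case.
Hypothesis nm0 : m <> \bot.
Lemma n2 : a <> \bot.
Proof. by move=> E; apply: nm0; apply: le_anti; rewrite le0x -E hma. Qed.
Lemma n3 : b <> \bot.
Proof. by move=> E; apply: nm0; apply: le_anti; rewrite le0x -E hmb. Qed.
Lemma n4 : c b <> \bot.
Proof. by move=> E; apply: nm0; apply: le_anti; rewrite le0x -E hmcb. Qed.
Lemma n5 : c a <> \bot.
Proof. by move=> E; apply: nm0; apply: le_anti; rewrite le0x -E hmca. Qed.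
Lemma n6 : c m <> \bot.
Proof. by move=> E; apply: nm0; apply: le_anti; rewrite le0x -E hmcm. Qed.
Lemma n7 : (\top : T) <> \bot.
Proof. by move=> E; apply: nm0; apply: le_anti; rewrite le0x -E lex1. Qed.

Definition f8 (u : B8) : T :=
  match u with
  | b8_0 => \bot | b8_z' => m | b8_x => a | b8_y => b
  | b8_y' => c b | b8_x' => c a | b8_z => c m | b8_1 => \top end.

Lemma emb8 : has_sub_B8 c.
Proof.
exists f8.
have ca' := cc a; have cb' := cc b; have cm' := cc m.
have := c0; have := c1.
have := n2; have := n3; have := n4; have := n5; have := n6; have := n7.
have := n8; have := n9; have := n10; have := n11; have := n12; have := n14;
have := n15; have := n16; move=> *.
have := hmcb; have := hbm; have := hcbca; have := hcam; have := hmb; have := hmcm;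
have := hacm; have := hmca; have := hcbcm; move=> *.
have [j1 j2 j3 j4] := joins.
have m1' : c a `&` a = m by rewrite meetC.
have m2' : c b `&` a = m by rewrite meetC.
have m3' : c a `&` b = m by rewrite meetC.
have m4' : c b `&` b = m by rewrite meetC.
have j1' : c a `|` a = c m by rewrite joinC.
have j2' : c b `|` a = c m by rewrite joinC.
have j3' : c a `|` b = c m by rewrite joinC.
have j4' : c b `|` b = c m by rewrite joinC.
split.
- by case; case => //= E; congruence.
- case; case => /=;
  first [ by rewrite meet_l // ?le0x ?lex1
        | by rewrite meet_r // ?le0x ?lex1
        | congruence ].
- case; case => /=;
  first [ by rewrite join_l // ?le0x ?lex1
        | by rewrite join_r // ?le0x ?lex1
        | congruence ].
- by case => /=; congruence.
- by [].
Qed.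
End B8case.

Section B6case.
Hypothesis hm0 : m = \bot.
Definition f6 (u : B6) : T :=
  match u with
  | b6_0 => \bot | b6_x => a | b6_y => b
  | b6_y' => c b | b6_x' => c a | b6_1 => \top end.

Lemma emb6 : has_sub_B6 c.
Proof.
exists f6.
have ca' := cc a; have cb' := cc b.
have := c0; have := c1.
have := n8; have := n9; have := n10; have := n11; have := n12; have := n14;
have := n15; have := n16; move=> *.
have := hcbca; move=> *.
have [j1 j2 j3 j4] := joins.
have m1' : c a `&` a = m by rewrite meetC.
have m2' : c b `&` a = m by rewrite meetC.
have m3' : c a `&` b = m by rewrite meetC.
have m4' : c b `&` b = m by rewrite meetC.
have j1' : c a `|` a = c m by rewrite joinC.
have j2' : c b `|` a = c m by rewrite joinC.
have j3' : c a `|` b = c m by rewrite joinC.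
have j4' : c b `|` b = c m by rewrite joinC.
subst m.
split.
- by case; case => //= E; congruence.
- case; case => /=;
  first [ by rewrite meet_l // ?le0x ?lex1
        | by rewrite meet_r // ?le0x ?lex1
        | congruence ].
- case; case => /=;
  first [ by rewrite join_l // ?le0x ?lex1
        | by rewrite join_r // ?le0x ?lex1
        | congruence ].
- by case => /=; congruence.
- by [].
Qed.
End B6case.
End Core.

Local Open Scope order_scope.
Lemma sp1_dir (disp : Order.disp_t) (T : tbLatticeType disp) (c : T -> T) :
  pseudo_kleene c -> ~ has_sub_B6 c /\ ~ has_sub_B8 c -> SP1 c.
Proof.
move=> hpk [n6 n8] x y hxy hyp.
set a := x `|` (y `&` c y); set b := y `&` (x `|` c x); set m := c x `&` y.
case: (eqVneq b a) => // /eqP nab; exfalso.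
have hab : (a <= b)%O.
  rewrite leUx !lexI hxy leUl leIl /=; exact: kleene.
have hma : (m <= a)%O.
  rewrite /m hyp leUx leUr andbT; exact: le_trans (leIl _ _) (leUl _ _).
have hay : (a <= y)%O by rewrite leUx hxy leIl.
have hby : (b <= y)%O by rewrite leIl.
have hcax : (c a <= c x)%O by rewrite /a (cJ hpk) leIl.
have hcbx : (c b <= c x)%O by rewrite (le_trans _ hcax) // (c_anti hpk).
have hmcb : (m <= c b)%O.
  rewrite /m hyp /b (cM hpk) (cJ hpk) (cc hpk) leUx; apply/andP; split.
    by rewrite meetC leUr.
  exact: le_trans (leIr _ _) (leUl _ _).
have hmca : (m <= c a)%O by rewrite (le_trans hmcb) // (c_anti hpk).
have hmb : (m <= b)%O by exact: le_trans hma hab.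
have key : forall u v, (u <= y)%O -> (v <= c x)%O -> (m <= u)%O -> (m <= v)%O ->
   (u `&` v)%O = m.
  move=> u v h1 h2 h3 h4; apply: le_anti; apply/andP; split.
    by rewrite /m meetC; exact: leI2.
  by rewrite lexI h3 h4.
have m1 := key a (c a) hay hcax hma hmca.
have m2 := key a (c b) hay hcbx hma hmcb.
have m3 := key b (c a) hby hcax hmb hmca.
have m4 := key b (c b) hby hcbx hmb hmcb.
have nab' : a <> b by move=> E; apply: nab; rewrite E.
case: (eqVneq m \bot) => [hm0|/eqP hm0].
  by apply: n6; exact: (emb6 hpk hab hma m1 m2 m3 m4 nab' hm0).
by apply: n8; exact: (emb8 hpk hab hma m1 m2 m3 m4 nab' hm0).
Qed.

Theorem theorem3p2 (disp : Order.disp_t) (T : tbLatticeType disp) (c : T -> T) :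
  pseudo_kleene c ->
  (SP1 c <-> (~ has_sub_B6 c /\ ~ has_sub_B8 c)).
Proof.
move=> hpk; split; last exact: sp1_dir.
move=> hsp; split.
  case=> f [inj hm hj hi [h0 h1]].
  have le : (f b6_x <= f b6_y)%O by apply/meet_idPl; rewrite -hm.
  have := hsp _ _ le; rewrite -!hi -!hm -!hj -!hm /= => H.
  by have := inj _ _ (H erefl).
case=> f [inj hm hj hi [h0 h1]].
have le : (f b8_x <= f b8_y)%O by apply/meet_idPl; rewrite -hm.
have := hsp _ _ le; rewrite -!hi -!hm -!hj -!hm /= => H.
by have := inj _ _ (H erefl).
Qed.
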